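(* Let $p\ge 5$ be a prime and let $N=\frac{1}{0}$ (the north pole) be a vertex of the level $p$ Farey map $\mathcal{M}_3(p)$. Define the finite sequence of vertices $$S=S(p)=\frac{1}{(p-1)/2},\ \frac{1}{(p-3)/2},\ \dots,\ \frac{1}{3},\ \frac{1}{2},\ \frac{2}{3},\ \frac{3}{4},\ \dots,\ \frac{(p-3)/2}{(p-1)/2},$$ i.e. first the terms $\frac{1}{k}$ for $k=\frac{p-1}{2},\frac{p-3}{2},\dots,2$ (decreasing), followed by the terms $\frac{m-1}{m}$ for $m=3,4,\dots,\frac{p-1}{2}$ (increasing). For $k\in\mathbb{Z}$ let $S+k$ denote the sequence obtained by replacing each term $\frac{x}{c}$ of $S$ by $\frac{x}{c}+k:=\frac{x+kc}{c}$. Let $S_2(p)$ be the concatenation $S\,(S+1)\,(S+2)\cdots(S+p-1)$, and let $S_1(p)$ be the sequence $\frac{0}{1},\frac{1}{1},\dots,\frac{p-1}{1}$. Then: (i) every term of $S_2(p)$ is a vertex at graph-theoretic distance exactly $2$ from $N$ in $\mathcal{M}_3(p)$, and every vertex at distance $2$ from $N$ occurs in $S_2(p)$; (ii) $S_2(p)$ is a Farey circuit, i.e. each term is joined by an edge of $\mathcal{M}_3(p)$ to the next term, and the last term is joined by an edge to the first term; (iii) $S_1(p)$ is a Farey circuit of length $p$ consisting of the vertices at distance $1$ from $N$, and $S_2(p)$ has length $p(p-4)$; (iv) $\mathcal{M}_3(p)$ has exactly $\frac{p-1}{2}$ poles.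
   Context: The Farey map $\mathcal{M}_3$ has vertex set $\mathbb{Q}\cup\{\infty\}$ with $\infty=\frac10$, two reduced fractions $\frac ac,\frac bd$ being joined by an edge iff $ad-bc=\pm1$; the modular group $\Gamma=\mathrm{PSL}(2,\mathbb{Z})$ acts on it by Möbius transformations. For $n\ge2$, $\mathcal{M}_3(n)=\mathcal{M}_3/\Gamma(n)$ is the quotient by the principal congruence subgroup $\Gamma(n)$. Concretely, for $p$ prime, the vertices of $\mathcal{M}_3(p)$ are the ''Farey fractions'' $\frac{a}{c}$ with $a,c\in\mathbb{Z}_p$ not both zero, where $\frac{a}{c}$ and $\frac{-a}{-c}$ denote the same vertex (so $\frac{a}{c}$ is the image of a fraction in $\mathcal{M}_3$ with numerator $\equiv a$ and denominator $\equiv c$ mod $p$), and two vertices $\frac ac,\frac bd$ are joined by an edge iff $ad-bc\equiv\pm1 \pmod p$. The graph-theoretic distance between two vertices is the length of a shortest edge path joining them. A Farey circuit is a sequence $f_1,\dots,f_k$ of vertices with $f_i$ joined by an edge to $f_{i+1}$, indices taken mod $k$ (terms may repeat). A pole is a vertex of the form $\frac{a}{0}$ (with $a\neq 0$). *)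

(* Defs.v *)
From HB Require Import structures.
From mathcomp Require Import all_boot all_order all_algebra.
Set Implicit Arguments. Unset Strict Implicit. Unset Printing Implicit Defensive.
Import GRing.Theory.
Local Open Scope ring_scope.

(* A Farey fraction a/c is represented by the pair (a, c) in F_p x F_p;
   the pairs (a,c) and (-a,-c) represent the same vertex. *)
Definition fpair (p : nat) := ('F_p * 'F_p)%type.

Definition negp (p : nat) (x : fpair p) : fpair p := (- x.1, - x.2).

Definition is_vertex (p : nat) (x : fpair p) : bool := x != (0, 0).

Definition same_vertex (p : nat) (x y : fpair p) : bool :=
  (x == y) || (x == negp y).

Definition adj (p : nat) (x y : fpair p) : bool :=
  (x.1 * y.2 - x.2 * y.1 == 1) || (x.1 * y.2 - x.2 * y.1 == -1).

Fixpoint walk (p : nat) (n : nat) (u v : fpair p) : Prop :=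
  match n with
  | 0%N => same_vertex u v
  | n'.+1 => exists w, adj u w /\ walk n' w v
  end.

Definition dist_is (p : nat) (u v : fpair p) (n : nat) : Prop :=
  walk n u v /\ forall m, (m < n)%N -> ~ walk m u v.

Definition farey_circuit (p : nat) (s : seq (fpair p)) : bool :=
  (s != [::]) && cycle (@adj p) s.

Definition northN (p : nat) : fpair p := (1, 0).

Definition shiftv (p : nat) (k : nat) (x : fpair p) : fpair p :=
  (x.1 + k%:R * x.2, x.2).

Definition seqS (p : nat) : seq (fpair p) :=
  [seq (1, k%:R) | k <- rev (iota 2 ((p.-1)./2 - 1))] ++
  [seq ((m.-1)%:R, m%:R) | m <- iota 3 ((p.-1)./2 - 2)].

Definition seqS2 (p : nat) : seq (fpair p) :=
  flatten [seq map (shiftv k) (seqS p) | k <- iota 0 p].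

Definition seqS1 (p : nat) : seq (fpair p) :=
  [seq (k%:R, 1) | k <- iota 0 p].

Definition vclass (p : nat) (x : fpair p) : {set fpair p} := [set x; negp x].

Definition poles (p : nat) : {set {set fpair p}} :=
  [set vclass x | x in [pred x : fpair p | (x.2 == 0) && (x.1 != 0)]].

(* Main.v *)
Require Import Defs.
From mathcomp Require Import all_boot all_order all_algebra.
From mathcomp Require Import ring zify.
Set Implicit Arguments. Unset Strict Implicit. Unset Printing Implicit Defensive.
Import GRing.Theory.
Local Open Scope ring_scope.


Section S.
Variable p : nat.
Hypothesis hp : prime p.

Lemma natF0 n : (n%:R == 0 :> 'F_p) = (p %| n)%N.
Proof. by rewrite (dvdn_pcharf (pchar_Fp hp)). Qed.

Lemma Fp_ltp (y : 'F_p) : (val y < p)%N.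
Proof. case: y => n hn /=; by rewrite (Fp_cast hp) in hn. Qed.

Lemma Fp_val (y : 'F_p) : (val y)%:R = y.
Proof. apply: val_inj; by rewrite /= val_Fp_nat // modn_small // Fp_ltp. Qed.

Lemma natF_inj a b : (a < p)%N -> (b < p)%N -> (a%:R = b%:R :> 'F_p) -> a = b.
Proof.
move=> ha hb e; have := congr1 (fun x : 'F_p => nat_of_ord x) e; rewrite /=; rewrite !val_Fp_nat // !modn_small //.
Qed.

Lemma natF_neq0 n : (0 < n)%N -> (n < p)%N -> (n%:R != 0 :> 'F_p).
Proof. move=> h1 h2; rewrite natF0; apply/negP => /dvdn_leq; lia. Qed.

Lemma natFp : (p%:R = 0 :> 'F_p).
Proof. exact: pchar_Fp_0. Qed.
End S.


Section G.
Variable p : nat.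
Local Notation F := ('F_p).
Local Notation N := (northN p).

Lemma negpK (x : fpair p) : negp (negp x) = x.
Proof. by case: x => a c; rewrite /negp /= !opprK. Qed.

Lemma adj_negr (x y : fpair p) : adj x (negp y) = adj x y.
Proof.
rewrite /adj /negp /= !mulrN opprK.
have -> : - (x.1 * y.2) + x.2 * y.1 = - (x.1 * y.2 - x.2 * y.1) by rewrite opprB addrC.
by rewrite !eqr_oppLR opprK orbC.
Qed.

Lemma adjN (w : fpair p) : adj N w = (w.2 == 1) || (w.2 == -1).
Proof. by rewrite /adj /northN /= mul1r mul0r subr0. Qed.

Lemma sv_refl (x : fpair p) : same_vertex x x.
Proof. by rewrite /same_vertex eqxx. Qed.

Lemma sv_sym (x y : fpair p) : same_vertex x y -> same_vertex y x.
Proof.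
rewrite /same_vertex => /orP[/eqP->|/eqP->]; first by rewrite eqxx.
by rewrite negpK eqxx orbT.
Qed.

Lemma sv_trans (x y z : fpair p) : same_vertex x y -> same_vertex y z -> same_vertex x z.
Proof.
rewrite /same_vertex => /orP[/eqP->|/eqP->] // /orP[/eqP->|/eqP->].
- by rewrite eqxx orbT.
- by rewrite negpK eqxx.
Qed.

Lemma adj_sv (x y z : fpair p) : adj x y -> same_vertex y z -> adj x z.
Proof. by move=> h /orP[/eqP<-|/eqP e] //; move: h; rewrite e adj_negr. Qed.

Lemma walk1E (v : fpair p) : walk 1 N v <-> adj N v.
Proof.
split; first by case=> w [h1 h2]; exact: adj_sv h1 h2.
by move=> h; exists v; split => //; exact: sv_refl.
Qed.

Lemma svN (v : fpair p) : same_vertex N v -> v.2 = 0.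
Proof.
rewrite /same_vertex /northN /negp => /orP[/eqP<-|/eqP e] //.
by move/(congr1 snd): e => /= /eqP; rewrite eq_sym oppr_eq0 => /eqP.
Qed.

Lemma dist1E (v : fpair p) : dist_is N v 1 <-> (v.2 == 1) || (v.2 == -1).
Proof.
split.
  by case=> /walk1E; rewrite adjN.
move=> h; split; first by apply/walk1E; rewrite adjN.
case=> // _ /svN e; move: h; rewrite e.
case/orP=> /eqP h; [have:= @oner_neq0 F | have:= @oppr_eq0 F 1; rewrite oner_eq0]. 
  by rewrite h eqxx.
by rewrite -h eqxx.
Qed.
End G.


Section G2.
Variable p : nat.
Local Notation F := ('F_p).
Local Notation N := (northN p).

Lemma dist2E (v : fpair p) :
  dist_is N v 2 <-> [&& v.2 != 0, v.2 != 1 & v.2 != -1].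
Proof.
split.
  case=> hw hn.
  have h1 : ~~ adj N v by apply/negP => /walk1E h; exact: (hn 1%N).
  move: h1; rewrite adjN negb_or => /andP[-> ->].
  suff -> : v.2 != 0 by [].
  apply/negP => /eqP v20; apply: (hn 0%N) => //=.
  case: hw => w [hNw [y [hwy hyv]]].
  apply: (sv_trans _ hyv).
  have y20 : y.2 = 0.
    case/orP: hyv => /eqP -> //=; by rewrite v20 oppr0.
  move: hNw hwy; rewrite adjN /adj y20 mulr0 sub0r.
  case: y y20 {hyv} => y1 y2 /= ->.
  rewrite /same_vertex /northN /negp /= !xpair_eqE oppr0 eqxx !andbT.
  case/orP => /eqP ->; rewrite ?mulNr ?opprK ?mul1r.
    by move=> h; rewrite !(eq_sym 1); move: h; rewrite eqr_opp orbC.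
  by rewrite !(eq_sym 1) eqr_oppLR.
case/and3P => h0 h1 h2; split.
  exists (((1 + v.1) / v.2), 1); split; first by rewrite adjN eqxx.
  exists v; split; last exact: sv_refl.
  by rewrite /adj /= divfK // mul1r addrK eqxx.
case=> [|[|//]] _.
  by move/svN => e; move: h0; rewrite e eqxx.
by move/walk1E; rewrite adjN (negbTE h1) (negbTE h2).
Qed.
End G2.


Section G4.
Variable p : nat.
Local Notation F := ('F_p).

Definition Fs n : seq (fpair p) := [seq (1, k%:R) | k <- rev (iota 2 n)].
Definition Gs i n : seq (fpair p) := [seq ((m.-1)%:R, m%:R) | m <- iota i.+2 n].

Lemma rev_iotaS m n : rev (iota m n.+1) = (m + n)%N :: rev (iota m n).
Proof. by rewrite -addn1 iotaD rev_cat /=. Qed.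

Lemma LF n : path (@adj p) (1, (n + 2)%:R) (Fs n) && (last (1, (n+2)%:R) (Fs n) == (1, 2%:R)).
Proof.
elim: n => [|n IH]; first by rewrite /= eqxx.
rewrite /Fs rev_iotaS /= -/(Fs n).
have -> : (2 + n)%N = (n + 2)%N by rewrite addnC.
case/andP: IH => P L; rewrite P L !andbT /adj /=.
have -> : 1 * (n + 2)%:R - (n.+1 + 2)%:R * 1 = -1 :> F.
  rewrite !natrD; ring.
by rewrite eqxx orbT.
Qed.

Lemma LG n : forall i, path (@adj p) (i%:R, i.+1%:R) (Gs i n) &&
  (last (i%:R, i.+1%:R) (Gs i n) == ((i + n)%:R, (i + n).+1%:R)).
Proof.
elim: n => [|n IH] i; first by rewrite /= addn0 eqxx.
rewrite /Gs /= -/(Gs i.+1 n).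
case/andP: (IH i.+1) => P; rewrite addSnnS => L; rewrite P L !andbT /adj /=.
have -> : i%:R * (i.+2)%:R - (i.+1)%:R * (i.+1)%:R = -1 :> F.
  rewrite -[i.+2]addn2 -[i.+1]addn1 !natrD; ring.
by rewrite eqxx orbT.
Qed.

Lemma shift_adj k (x y : fpair p) : adj (shiftv k x) (shiftv k y) = adj x y.
Proof.
case: x y => [a b] [c d]; rewrite /adj /shiftv /=.
by have -> : (a + k%:R * b) * d - b * (c + k%:R * d) = a * d - b * c by ring.
Qed.

Lemma shift_path k (a : fpair p) t : path (@adj p) (shiftv k a) (map (shiftv k) t) = path (@adj p) a t.
Proof. by elim: t a => //= b t IH a; rewrite shift_adj IH. Qed.

Lemma blocks_path (a : fpair p) t :
  path (@adj p) a t ->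
  (forall k, adj (shiftv k (last a t)) (shiftv k.+1 a)) ->
  forall n m x, adj x (shiftv m a) ->
  path (@adj p) x (flatten [seq map (shiftv k) (a :: t) | k <- iota m n] ++ [:: shiftv (m + n) a]).
Proof.
move=> P J; elim=> [|n IH] m x hx; first by rewrite /= addn0 hx.
rewrite /= hx -catA cat_path shift_path P /= last_map.
by rewrite -addSnnS; apply: IH; apply: J.
Qed.

Lemma blocks_cycle (a : fpair p) t q :
  path (@adj p) a t ->
  (forall k, adj (shiftv k (last a t)) (shiftv k.+1 a)) ->
  shiftv q.+1 a = shiftv 0 a ->
  cycle (@adj p) (flatten [seq map (shiftv k) (a :: t) | k <- iota 0 q.+1]).
Proof.
move=> P J e.
rewrite /= -cats1 -catA cat_path shift_path P /= last_map.
have := blocks_path P J q (J 0%N); rewrite add1n e; exact.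
Qed.

Lemma size_blocks (s : seq (fpair p)) l :
  size (flatten [seq map (shiftv k) s | k <- l]) = (size l * size s)%N.
Proof. by elim: l => //= k l IH; rewrite size_cat size_map IH mulSn. Qed.

End G4.


Lemma p_shape p : prime p -> (5 <= p)%N -> p = (((p.-1)./2 - 2).*2 + 5)%N /\ (p.-1)./2 = (((p.-1)./2 - 2) + 2)%N.
Proof.
move=> hp h5; have [e2|od] := even_prime hp; first by rewrite e2 in h5.
have e := odd_double_half p; rewrite od in e.
rewrite -muln2 /= in e.
have e1 : p.-1 = (p./2).*2 by rewrite -muln2; lia.
rewrite e1 doubleK; lia.
Qed.

Section M.
Variable p : nat.
Hypothesis hp : prime p.
Variable q : nat.
Hypothesis hpq : p = (q.*2 + 5)%N.
Hypothesis hh : (p.-1)./2 = (q + 2)%N.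
Local Notation F := ('F_p).

Lemma seqS_eq : seqS p = (1, (q + 2)%:R) :: (Fs p q ++ Gs p 1 q).
Proof.
rewrite /seqS hh.
have -> : (q + 2 - 1)%N = q.+1 by lia.
have -> : (q + 2 - 2)%N = q by lia.
by rewrite rev_iotaS /= addnC.
Qed.

Lemma seqS_path : path (@adj p) (1, (q + 2)%:R) (Fs p q ++ Gs p 1 q).
Proof.
rewrite cat_path; case/andP: (LF p q) => -> /eqP ->.
by case/andP: (LG p q 1).
Qed.

Lemma seqS_last : last (1, (q + 2)%:R) (Fs p q ++ Gs p 1 q) = ((1 + q)%:R, (1 + q).+1%:R).
Proof.
rewrite last_cat; case/andP: (LF p q) => _ /eqP ->.
by case/andP: (LG p q 1) => _ /eqP.
Qed.

Lemma seqS_J k : adj (shiftv k ((1 + q)%:R, (1 + q).+1%:R)) (shiftv k.+1 ((1, (q + 2)%:R) : fpair p)).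
Proof.
rewrite /adj /shiftv /=.
have -> : ((1 + q)%:R + k%:R * (1 + q).+1%:R) * (q + 2)%:R -
   (1 + q).+1%:R * (1 + k.+1%:R * (q + 2)%:R) = 1 - (q.*2 + 5)%:R :> F.
  rewrite -[(1 + q).+1]addn1 -[k.+1]addn1 -muln2 !natrD !natrM; ring.
by rewrite -hpq natFp // subr0 eqxx.
Qed.

Lemma seqS2_cycle : cycle (@adj p) (seqS2 p).
Proof.
rewrite /seqS2 seqS_eq.
have E : p = (q.*2 + 4).+1 by rewrite hpq addnS.
rewrite [in iota 0 p]E.
apply: blocks_cycle; first exact: seqS_path.
  by move=> k; rewrite seqS_last; exact: seqS_J.
by rewrite /shiftv /= -E natFp.
Qed.

Lemma size_seqS : size (seqS p) = (p - 4)%N.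
Proof. rewrite /seqS size_cat !size_map size_rev !size_iota hh; lia. Qed.

Lemma size_seqS2 : size (seqS2 p) = (p * (p - 4))%N.
Proof. by rewrite /seqS2 size_blocks size_iota size_seqS. Qed.

End M.


Section M2.
Variable p : nat.
Hypothesis hp : prime p.
Variable q : nat.
Hypothesis hpq : p = (q.*2 + 5)%N.
Hypothesis hh : (p.-1)./2 = (q + 2)%N.
Local Notation F := ('F_p).

Lemma memS (y : fpair p) : y \in seqS p -> exists2 j, (2 <= j <= q + 2)%N & y.2 = j%:R.
Proof.
rewrite /seqS hh mem_cat => /orP[] /mapP [j].
  rewrite mem_rev mem_iota => hj -> /=; exists j => //; lia.
rewrite mem_iota => hj -> /=; exists j => //; lia.
Qed.

Lemma S_has j : (2 <= j <= q + 2)%N -> ((1, j%:R) : fpair p) \in seqS p.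
Proof.
move=> hj; rewrite /seqS hh mem_cat; apply/orP; left.
apply: (map_f (fun k => ((1, k%:R) : fpair p))).
rewrite mem_rev mem_iota; lia.
Qed.

Lemma den_ok j : (2 <= j <= q + 2)%N -> [&& (j%:R : F) != 0, (j%:R : F) != 1 & (j%:R : F) != -1].
Proof.
move=> hj; apply/and3P; split.
- apply: natF_neq0 => //; lia.
- apply/eqP => e; have : j = 1%N by apply: (natF_inj hp) => //; lia.
  lia.
- apply/eqP => e; have : ((j + 1)%:R : F) != 0 by apply: natF_neq0 => //; lia.
  by rewrite natrD e addNr eqxx.
Qed.

Lemma S2_fwd x : x \in seqS2 p -> is_vertex x /\ dist_is (northN p) x 2.
Proof.
case/flattenP => s /mapP [k _ ->] /mapP [y hy ->].
have [j hj e] := memS hy.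
have := den_ok hj; rewrite -e => hd.
split; last by apply/dist2E.
rewrite /is_vertex xpair_eqE /= negb_and; case/and3P: hd => -> _ _; exact: orbT.
Qed.

Lemma S2_bwd v : is_vertex v -> dist_is (northN p) v 2 ->
      exists2 x, x \in seqS2 p & same_vertex x v.
Proof.
move=> _ /dist2E /and3P [h0 h1 h2].
pose n := val v.2.
have ev : v.2 = n%:R by rewrite Fp_val.
have hn : (n < p)%N by exact: Fp_ltp.
have n0 : n != 0%N by apply/eqP => e; move: h0; rewrite ev e eqxx.
have n1 : n != 1%N by apply/eqP => e; move: h1; rewrite ev e eqxx.
have n2 : n != p.-1 by apply/eqP => e; move: h2; rewrite ev e -subn1 natrB ?(natFp hp) ?sub0r ?eqxx //; lia.
have [u [j [hj hu su]]] : exists u : fpair p, exists j, [/\ (2 <= j <= q + 2)%N, u.2 = j%:R & same_vertex u v].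
  case: (leqP n (q + 2)) => hnq.
    exists v, n; split => //; [lia | exact: sv_refl].
  exists (negp v), (p - n)%N; split; first by lia.
    by rewrite /= natrB ?(natFp hp) ?sub0r -?ev //; lia.
  by rewrite /same_vertex eqxx orbT.
have hu0 : u.2 != 0 by case/and3P: (den_ok hj); rewrite hu.
pose k := val ((u.1 - 1) / u.2).
exists (shiftv k (1, u.2)); last first.
  have -> : shiftv k (1, u.2) = u.
    rewrite /shiftv /= /k Fp_val // (divfK hu0) addrC subrK.
    by case: (u).
  exact: su.
apply/flattenP; exists (map (shiftv k) (seqS p)).
  by apply: map_f; rewrite mem_iota add0n; exact: Fp_ltp.
by apply: map_f; rewrite hu; exact: S_has.
Qed.

End M2.


Section M3.
Variable p : nat.
Hypothesis hp : prime p.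
Variable q : nat.
Hypothesis hpq : p = (q.*2 + 5)%N.
Hypothesis hh : (p.-1)./2 = (q + 2)%N.
Local Notation F := ('F_p).

Lemma S1_path n : forall i, path (@adj p) (i%:R, 1) [seq (k%:R, 1) | k <- iota i.+1 n].
Proof.
elim: n => [|n IH] i //=; rewrite IH andbT /adj /=.
have -> : i%:R * 1 - 1 * (i.+1)%:R = -1 :> F by rewrite -[i.+1]addn1 natrD; ring.
by rewrite eqxx orbT.
Qed.

Lemma S1_cycle : cycle (@adj p) (seqS1 p).
Proof.
have E : p = (q.*2 + 4).+1 by rewrite hpq addnS.
rewrite /seqS1 [in iota 0 p]E /=.
have e : ((0%:R, 1) : fpair p) = ((q.*2 + 4).+1%:R, 1) by rewrite -E natFp.
rewrite [X in rcons _ X]e -map_rcons -cats1 -(iotaD 1 (q.*2 + 4) 1) addn1.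
exact: S1_path.
Qed.

Lemma S1_fwd x : x \in seqS1 p -> is_vertex x /\ dist_is (northN p) x 1.
Proof.
case/mapP => k _ ->; split.
  by rewrite /is_vertex xpair_eqE /= oner_eq0 andbF.
by apply/dist1E; rewrite eqxx.
Qed.

Lemma S1_bwd v : is_vertex v -> dist_is (northN p) v 1 ->
      exists2 x, x \in seqS1 p & same_vertex x v.
Proof.
move=> _ /dist1E /orP [] /eqP e.
  exists ((val v.1)%:R, 1).
    by apply: (map_f (fun k => ((k%:R, 1) : fpair p))); rewrite mem_iota add0n Fp_ltp.
  by rewrite Fp_val // -e; case: (v) => a c; exact: sv_refl.
exists ((val (- v.1))%:R, 1).
  by apply: (map_f (fun k => ((k%:R, 1) : fpair p))); rewrite mem_iota add0n Fp_ltp.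
rewrite Fp_val // /same_vertex /negp e opprK.
by case: (v) => a c /=; rewrite eqxx orbT.
Qed.

End M3.


Section M4.
Variable p : nat.
Hypothesis hp : prime p.
Variable q : nat.
Hypothesis hpq : p = (q.*2 + 5)%N.
Hypothesis hh : (p.-1)./2 = (q + 2)%N.
Local Notation F := ('F_p).

Definition gpole (i : 'I_(q + 2)) : {set fpair p} := vclass (((i : nat).+1)%:R, 0).

Lemma vclass_neg (x : fpair p) : vclass (negp x) = vclass x.
Proof. by rewrite /vclass negpK setUC. Qed.

Lemma gpole_inj : injective gpole.
Proof.
move=> i j e.
have : (((i : nat).+1)%:R, 0) \in gpole j by rewrite -e /gpole /vclass in_set2 eqxx.
rewrite /gpole /vclass in_set2 /negp /= !xpair_eqE oppr0 eqxx !andbT.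
have hi := ltn_ord i; have hj := ltn_ord j.
case/orP => /eqP h.
  apply: val_inj => /=; have := natF_inj hp _ _ h; lia.
have : ((i.+1 + j.+1)%:R : F) != 0 by apply: natF_neq0 => //; lia.
by rewrite natrD h addNr eqxx.
Qed.

Lemma poles_eq : poles p = gpole @: setT.
Proof.
apply/setP => X; apply/imsetP/imsetP.
  case=> x; rewrite inE => /andP [/eqP x2 x1] ->.
  pose n := val x.1.
  have ex : x.1 = n%:R by rewrite Fp_val.
  have hn : (n < p)%N by exact: Fp_ltp.
  have n0 : n != 0%N by apply/eqP => e; move: x1; rewrite ex e eqxx.
  case: (leqP n (q + 2)) => hnq.
    have hi : (n.-1 < q + 2)%N by lia.
    exists (Ordinal hi) => //.
    rewrite /gpole /= prednK ?lt0n // -ex -x2; by case: (x).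
  have hi : ((p - n).-1 < q + 2)%N by lia.
  exists (Ordinal hi) => //.
  rewrite /gpole /= prednK; last by lia.
  rewrite natrB ?(natFp hp) ?sub0r -?ex; last by lia.
  by rewrite -vclass_neg /negp x2 oppr0.
case=> i _ ->; exists (((i : nat).+1)%:R, 0) => //.
rewrite inE /=; apply: natF_neq0 => //; have := ltn_ord i; lia.
Qed.

Lemma poles_card : #|poles p| = (p.-1)./2.
Proof. by rewrite poles_eq card_imset ?cardsT ?card_ord ?hh //; exact: gpole_inj. Qed.

End M4.

Local Close Scope ring_scope.

Theorem theorem2 (p : nat) (hp : prime p) (h5 : (5 <= p)%N) :
  (* (i) *)
  ((forall x, x \in seqS2 p -> is_vertex x /\ dist_is (northN p) x 2) /\
   (forall v : fpair p, is_vertex v -> dist_is (northN p) v 2 ->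
      exists2 x, x \in seqS2 p & same_vertex x v)) /\
  (* (ii) *)
  farey_circuit (seqS2 p) /\
  (* (iii) *)
  (farey_circuit (seqS1 p) /\ size (seqS1 p) = p /\
   (forall x, x \in seqS1 p -> is_vertex x /\ dist_is (northN p) x 1) /\
   (forall v : fpair p, is_vertex v -> dist_is (northN p) v 1 ->
      exists2 x, x \in seqS1 p & same_vertex x v) /\
   size (seqS2 p) = (p * (p - 4))%N) /\
  (* (iv) *)
  #|poles p| = (p.-1)./2.
Proof.
have [hpq hh] := p_shape hp h5.
set q := ((p.-1)./2 - 2)%N in hpq hh.
split; [split|split; [|split; [split; [|split; [|split; [|split]]]|]]].
- exact: (S2_fwd hp hpq hh).
- exact: (S2_bwd hp hpq hh).
- rewrite /farey_circuit (seqS2_cycle hp hpq hh) andbT -size_eq0 (size_seqS2 hp hpq hh).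
  by rewrite muln_eq0; apply/negP => /orP []; lia.
- by rewrite /farey_circuit (S1_cycle hp hpq) andbT /seqS1 -size_eq0 size_map size_iota; lia.
- by rewrite /seqS1 size_map size_iota.
- exact: (S1_fwd (p:=p)).
- exact: (S1_bwd hp).
- exact: (size_seqS2 hp hpq hh).
- exact: (poles_card hp hpq hh).
Qed.
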